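(* Let $H_1,H_2$ be separable Hilbert spaces, $K\in B(H_1)$, $L\in B(H_2)$. Let $\{x_n\}_{n\geqslant1}$ be a $K$-frame for $H_1$ and $\{y_n\}_{n\geqslant1}$ an $L$-frame for $H_2$, and let $\theta_1,\theta_2$ be their analysis operators (frame transforms). If $R(\theta_1)\perp R(\theta_2)$ in $\ell^2$, then $\{x_n\oplus y_n\}_{n\geqslant1}$ is a $K\oplus L$-frame for $H_1\oplus H_2$.
   Context: $H_1\oplus H_2$ is the Hilbert space of pairs $x\oplus y$ with inner product $\langle x\oplus y,a\oplus b\rangle=\langle x,a\rangle+\langle y,b\rangle$; $(K\oplus L)(x\oplus y)=K(x)\oplus L(y)$. For a Hilbert space $H$ and $K\in B(H)$, $\{z_n\}_{n\geqslant1}$ is a $K$-frame if there are $A,B>0$ with $A\|K^*z\|^2\leq\sum_n|\langle z,z_n\rangle|^2\leq B\|z\|^2$ for all $z\in H$. The analysis operator of such a sequence is $\theta:H\to\ell^2$, $\theta(z)=\{\langle z,z_n\rangle\}_{n\geqslant1}$; $R(\cdot)$ denotes range. *)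

(* Defs.v *)
From HB Require Import structures.
From mathcomp Require Import all_boot all_order all_algebra complex.
From mathcomp Require Import all_classical all_reals all_analysis.
Set Implicit Arguments. Unset Strict Implicit. Unset Printing Implicit Defensive.
Import Order.TTheory GRing.Theory Num.Theory numFieldNormedType.Exports.
Local Open Scope classical_set_scope.
Local Open Scope ring_scope.

Section Hilbert.
Context {R : realType}.

Definition sqmodC (z : R[i]) : R := complex.Re z ^+ 2 + complex.Im z ^+ 2.

Context {V : lmodType R[i]}.

Definition is_inner_product (ip : V -> V -> R[i]) : Prop :=
  [/\ forall (a : R[i]) (x y z : V), ip (a *: x + y) z = a * ip x z + ip y z,
      forall x y : V, ip y x = (ip x y)^*,
      forall x : V, 0 <= ip x x
    & forall x : V, ip x x = 0 -> x = 0].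

Definition ipnorm (ip : V -> V -> R[i]) (x : V) : R := Num.sqrt (complex.Re (ip x x)).

Definition ip_complete (ip : V -> V -> R[i]) : Prop :=
  forall u : nat -> V,
    (forall e : R, 0 < e -> exists N : nat, forall m n : nat, (N <= m)%N -> (N <= n)%N ->
        ipnorm ip (u m - u n) < e) ->
    exists l : V, (fun n => ipnorm ip (u n - l)) @ \oo --> (0 : R).

Definition ip_separable (ip : V -> V -> R[i]) : Prop :=
  exists d : nat -> V, forall (x : V) (e : R), 0 < e -> exists n : nat, ipnorm ip (x - d n) < e.

Definition is_separable_hilbert (ip : V -> V -> R[i]) : Prop :=
  [/\ is_inner_product ip, ip_complete ip & ip_separable ip].

Definition is_bounded_op (ip : V -> V -> R[i]) (K : V -> V) : Prop :=
  (forall (a : R[i]) (x y : V), K (a *: x + y) = a *: K x + K y) /\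
  exists M : R, forall x : V, ipnorm ip (K x) <= M * ipnorm ip x.

Definition is_adjoint (ip : V -> V -> R[i]) (K Kadj : V -> V) : Prop :=
  forall x y : V, ip (K x) y = ip x (Kadj y).

(* sum_n |<z, z_n>|^2, as an extended real (always defined) *)
Definition frame_sum (ip : V -> V -> R[i]) (zs : nat -> V) (z : V) : \bar R :=
  (\sum_(n <oo) (sqmodC (ip z (zs n)))%:E)%E.

(* {z_n} is a K-frame: A ||K^* z||^2 <= sum_n |<z,z_n>|^2 <= B ||z||^2.
   K^* is any (the) adjoint of K. *)
Definition is_K_frame (ip : V -> V -> R[i]) (K : V -> V) (zs : nat -> V) : Prop :=
  exists A B : R, [/\ 0 < A, 0 < B,
    forall z : V, (frame_sum ip zs z <= (B * ipnorm ip z ^+ 2)%:E)%E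
  & forall Kadj : V -> V, is_adjoint ip K Kadj ->
      forall z : V, ((A * ipnorm ip (Kadj z) ^+ 2)%:E <= frame_sum ip zs z)%E].

Definition analysis_op (ip : V -> V -> R[i]) (zs : nat -> V) (z : V) : nat -> R[i] :=
  fun n => ip z (zs n).

End Hilbert.

Definition l2_ip {R : realType} (a b : nat -> R[i]) : R[i] :=
  Complex (limn (series (fun n => complex.Re (a n * (b n)^*))))
          (limn (series (fun n => complex.Im (a n * (b n)^*)))).

Definition dsum_ip {R : realType} {V1 V2 : lmodType R[i]}
  (ip1 : V1 -> V1 -> R[i]) (ip2 : V2 -> V2 -> R[i]) (p q : V1 * V2) : R[i] :=
  ip1 p.1 q.1 + ip2 p.2 q.2.

Definition dsum_op {V1 V2 : Type} (K : V1 -> V1) (L : V2 -> V2) (p : V1 * V2) : V1 * V2 :=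
  (K p.1, L p.2).

Definition dsum_seq {V1 V2 : Type} (x : nat -> V1) (y : nat -> V2) : nat -> V1 * V2 :=
  fun n => (x n, y n).

(* Main.v *)
Require Import Defs.
From HB Require Import structures.
From mathcomp Require Import all_boot all_order all_algebra complex.
From mathcomp Require Import all_classical all_reals all_analysis.
Import Order.TTheory GRing.Theory Num.Theory numFieldNormedType.Exports.
Local Open Scope ring_scope.
From mathcomp Require Import lra.

Section Ser.
Context {R : realType}.

Lemma esum_series (f : nat -> R) : cvgn (series f) ->
  (\sum_(n <oo) (f n)%:E)%E = (limn (series f))%:E.
Proof.
move=> cf; rewrite -EFin_lim //; congr (limn _); apply/funext => N /=.
by rewrite sumEFin.
Qed.

Lemma cvg_of_fin (f : nat -> R) : (forall n, 0 <= f n) ->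
  (\sum_(n <oo) (f n)%:E < +oo)%E -> cvgn (series f).
Proof.
move=> f0 fin.
have ge0 : (0 <= \sum_(n <oo) (f n)%:E)%E by apply: nneseries_ge0 => n _ _; rewrite lee_fin.
apply: nondecreasing_is_cvgn.
  by apply: nondecreasing_series => n _ _; exact: f0.
exists (fine (\sum_(n <oo) (f n)%:E)) => _ [N _ <-].
rewrite -lee_fin fineK; last by rewrite ge0_fin_numE.
rewrite /series /= -sumEFin.
by apply: (nneseries_lim_ge (P := xpredT)) => n _ _; rewrite lee_fin.
Qed.

Lemma key_sum (p q c : nat -> R) : (forall n, 0 <= p n) -> (forall n, 0 <= q n) ->
  (forall n, `|c n| <= p n + q n) ->
  (\sum_(n <oo) (p n)%:E < +oo)%E -> (\sum_(n <oo) (q n)%:E < +oo)%E ->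
  limn (series c) = 0 ->
  (\sum_(n <oo) (p n + q n + c n *+ 2)%:E)%E =
  (\sum_(n <oo) (p n)%:E + \sum_(n <oo) (q n)%:E)%E.
Proof.
move=> p0 q0 cpq fp fq c0.
have cp := cvg_of_fin _ p0 fp; have cq := cvg_of_fin _ q0 fq.
have cpq' : cvgn (series (p + q)) by exact: is_cvg_seriesD.
have cc : cvgn (series c).
  apply: normed_cvg; apply: (series_le_cvg _ _ _ cpq') => n /=.
  - by [].
  - by rewrite addr_ge0.
  - exact: cpq.
rewrite (@eq_eseriesr _ _ (fun n => ((p + q + (2 : R) *: c) n)%:E)); last first.
  by move=> n _; congr (_%:E); rewrite !fctE scaler_nat.
rewrite (esum_series (p + q + (2:R) *: c)); last by apply: is_cvg_seriesD => //; exact: is_cvg_seriesZ.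
rewrite lim_seriesD //; last exact: is_cvg_seriesZ.
rewrite lim_seriesZ // c0 scaler0 addr0 lim_seriesD //.
by rewrite (esum_series p) // (esum_series q).
Qed.
End Ser.

Section C.
Context {R : realType}.
Lemma Re_mulconj (u v : R[i]) : complex.Re (u * v^*) = complex.Re u * complex.Re v + complex.Im u * complex.Im v.
Proof. case: u => a b; case: v => c d /=. lra. Qed.

Lemma sqmodCD (u v : R[i]) : sqmodC (u + v) = sqmodC u + sqmodC v + complex.Re (u * v^*) *+ 2.
Proof. rewrite Re_mulconj /sqmodC; case: u => a b; case: v => c d /=. lra. Qed.

Lemma Re_mulconj_le (u v : R[i]) : `|complex.Re (u * v^*)| <= sqmodC u + sqmodC v.
Proof. rewrite Re_mulconj /sqmodC; case: u => a b; case: v => c d /=.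
have := sqr_ge0 (a - c); have := sqr_ge0 (b - d); have := sqr_ge0 (a + c); have := sqr_ge0 (b + d).
move=> h1 h2 h3 h4.
rewrite ler_norml; apply/andP; split; nra. Qed.

Lemma sqmodC_ge0 (u : R[i]) : 0 <= sqmodC u.
Proof. rewrite /sqmodC; nra. Qed.
End C.

Section IP.
Context {R : realType} {V : lmodType R[i]} (ip : V -> V -> R[i]).
Hypothesis Hip : is_inner_product ip.

Lemma ipDl x y z : ip (x + y) z = ip x z + ip y z.
Proof. by case: Hip => h _ _ _; have := h 1 x y z; rewrite scale1r mul1r. Qed.

Lemma ip0l z : ip 0 z = 0.
Proof. by apply: (@addrI _ (ip 0 z)); rewrite -ipDl !addr0. Qed.

Lemma ipDr x y z : ip x (y + z) = ip x y + ip x z.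
Proof.
case: Hip => _ hc _ _.
by rewrite hc ipDl rmorphD /= -!hc.
Qed.

Lemma ip0r z : ip z 0 = 0.
Proof. by apply: (@addrI _ (ip z 0)); rewrite -ipDr !addr0. Qed.

Lemma ipBr x y z : ip x (y - z) = ip x y - ip x z.
Proof.
apply: (@addrI _ (ip x z)); rewrite -ipDr addrC subrK.
by rewrite addrC subrK.
Qed.

Lemma ip_uniq c d : (forall u, ip u c = ip u d) -> c = d.
Proof.
move=> h; apply/eqP; rewrite -subr_eq0; apply/eqP.
case: Hip => _ _ _ h0; apply: h0.
by rewrite ipBr h subrr.
Qed.

Lemma ipnorm2 x : ipnorm ip x ^+ 2 = complex.Re (ip x x).
Proof.
case: Hip => _ _ h _; rewrite /ipnorm sqr_sqrtr //.
by move: (h x); rewrite lecE /= => /andP[].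
Qed.

Lemma ipRe_ge0 x : 0 <= complex.Re (ip x x).
Proof. by rewrite -ipnorm2 sqr_ge0. Qed.
End IP.

Theorem proposition2p10 (R : realType) (V1 V2 : lmodType R[i])
  (ip1 : V1 -> V1 -> R[i]) (ip2 : V2 -> V2 -> R[i])
  (K : V1 -> V1) (L : V2 -> V2) (x : nat -> V1) (y : nat -> V2) :
  is_separable_hilbert ip1 -> is_separable_hilbert ip2 ->
  is_bounded_op ip1 K -> is_bounded_op ip2 L ->
  is_K_frame ip1 K x -> is_K_frame ip2 L y ->
  (forall (a : V1) (b : V2), l2_ip (analysis_op ip1 x a) (analysis_op ip2 y b) = 0) ->
  is_K_frame (dsum_ip ip1 ip2) (dsum_op K L) (dsum_seq x y).
Proof.
move=> [Hip1 _ _] [Hip2 _ _] [linK _] [linL _].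
move=> [A1 [B1 [A1p B1p up1 lo1]]] [A2 [B2 [A2p B2p up2 lo2]]] orth.
have fs_split : forall (a : V1) (b : V2),
    frame_sum (dsum_ip ip1 ip2) (dsum_seq x y) (a, b) =
    (frame_sum ip1 x a + frame_sum ip2 y b)%E.
  move=> a b; rewrite /frame_sum.
  rewrite (@eq_eseriesr _ _ (fun n => (sqmodC (ip1 a (x n)) + sqmodC (ip2 b (y n))
     + complex.Re (ip1 a (x n) * (ip2 b (y n))^*) *+ 2)%:E)); last first.
    by move=> n _; rewrite /dsum_ip /dsum_seq /= sqmodCD.
  apply: key_sum.
  - by move=> n; exact: sqmodC_ge0.
  - by move=> n; exact: sqmodC_ge0.
  - by move=> n; exact: Re_mulconj_le.
  - by apply: le_lt_trans (up1 a) _; exact: ltry.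
  - by apply: le_lt_trans (up2 b) _; exact: ltry.
  - by move: (orth a b); rewrite /l2_ip /analysis_op => /(congr1 (@complex.Re R)).
have nsplit : forall (a : V1) (b : V2),
    ipnorm (dsum_ip ip1 ip2) (a, b) ^+ 2 = ipnorm ip1 a ^+ 2 + ipnorm ip2 b ^+ 2.
  move=> a b; rewrite (ipnorm2 ip1 Hip1) (ipnorm2 ip2 Hip2) /ipnorm /dsum_ip /=.
  have -> : complex.Re (ip1 a a + ip2 b b) = complex.Re (ip1 a a) + complex.Re (ip2 b b).
    by case: (ip1 a a) => ? ?; case: (ip2 b b) => ? ?.
  by rewrite sqr_sqrtr //; exact: addr_ge0 (ipRe_ge0 ip1 Hip1 a) (ipRe_ge0 ip2 Hip2 b).
have K0 : K 0 = 0.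
  apply: (@addrI _ (K 0)); rewrite addr0.
  by have := linK 1 0 0; rewrite !scale1r addr0 => <-.
have L0 : L 0 = 0.
  apply: (@addrI _ (L 0)); rewrite addr0.
  by have := linL 1 0 0; rewrite !scale1r addr0 => <-.
exists (Order.min A1 A2), (Order.max B1 B2); split.
- by rewrite lt_min A1p A2p.
- by rewrite lt_max B1p.
- move=> [a b]; rewrite fs_split nsplit.
  apply: (le_trans (leeD (up1 a) (up2 b))).
  rewrite -EFinD lee_fin mulrDr lerD // ler_wpM2r // ?sqr_ge0 // le_max lexx ?orbT //.
- move=> Kadj hadj [a b].
  pose K1 := fun u => (Kadj (u, 0)).1.
  pose L2 := fun v => (Kadj (0, v)).2.
  have adjK : is_adjoint ip1 K K1.
    move=> u v; move: (hadj (u, 0) (v, 0)).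
    by rewrite /dsum_ip /dsum_op /= L0 !(ip0l ip2 Hip2) !addr0.
  have adjL : is_adjoint ip2 L L2.
    move=> u v; move: (hadj (0, u) (0, v)).
    by rewrite /dsum_ip /dsum_op /= K0 !(ip0l ip1 Hip1) !add0r.
  have e1 : (Kadj (a, b)).1 = K1 a.
    apply: (ip_uniq ip1 Hip1) => u; rewrite -(adjK u a).
    by move: (hadj (u, 0) (a, b)); rewrite /dsum_ip /dsum_op /= L0 !(ip0l ip2 Hip2) !addr0.
  have e2 : (Kadj (a, b)).2 = L2 b.
    apply: (ip_uniq ip2 Hip2) => u; rewrite -(adjL u b).
    by move: (hadj (0, u) (a, b)); rewrite /dsum_ip /dsum_op /= K0 !(ip0l ip1 Hip1) !add0r.
  rewrite (surjective_pairing (Kadj (a, b))) e1 e2 nsplit fs_split.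
  apply: le_trans (leeD (lo1 K1 adjK a) (lo2 L2 adjL b)).
  rewrite -EFinD lee_fin mulrDr lerD // ler_wpM2r // ?sqr_ge0 // ge_min lexx ?orbT //.
Qed.
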